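(* Let $H$ be a connected graph of order $a \in \mathbb{N}$. Then for every integer $b \ge 2$, $R_\mathrm{cyc}(H, C_b^\mathrm{mon}) \ge 1 + (a-1)(b-1)$.
   Context: All graphs are finite, simple and undirected, and a graph of order $n$ has vertex set $\{0,1,\ldots,n-1\}$; $K_n$ is the complete graph on $\{0,\ldots,n-1\}$. A $2$-edge-coloring of $K_n$ assigns each edge a color in $\{1,2\}$. For a graph $H$ and such a coloring, an embedding of $H$ in color $j$ is an injective map $\varphi\colon V(H)\to V(K_n)$ such that for every edge $uv$ of $H$ the edge $\{\varphi(u),\varphi(v)\}$ has color $j$; it is increasing up to a cyclic permutation if there exists $t\in V(H)$ such that $(\varphi(t),\ldots,\varphi(|H|-1),\varphi(0),\ldots,\varphi(t-1))$ is increasing. The cyclic Ramsey number $R_\mathrm{cyc}(H_1,H_2)$ is the smallest $n$ such that every $2$-edge-coloring of $K_n$ admits an embedding of $H_1$ in color $1$ or of $H_2$ in color $2$ that is increasing up to a cyclic permutation. For $n\ge 3$, the monotone cycle $C_n^\mathrm{mon}$ is the graph of order $n$ with edges $\{i,i+1\}$ for $0\le i\le n-2$ together with $\{0,n-1\}$; by convention $C_2^\mathrm{mon}=K_2$. *)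

(* Defs.v *)
From mathcomp Require Import all_boot.
Set Implicit Arguments. Unset Strict Implicit. Unset Printing Implicit Defensive.

Definition simple_graph (n : nat) (G : rel 'I_n) : Prop :=
  symmetric G /\ irreflexive G.

Definition connected_graph (n : nat) (G : rel 'I_n) : Prop :=
  forall x y : 'I_n, connect G x y.

(* A 2-edge-colouring of K_n: a symmetric colour function with values in {1,2}
   (the diagonal values are irrelevant: they are never used). *)
Definition two_coloring (n : nat) (c : 'I_n -> 'I_n -> nat) : Prop :=
  (forall x y, c x y = c y x) /\ (forall x y, c x y = 1 \/ c x y = 2).

Definition embedding_in_color (a n : nat) (H : rel 'I_a)
    (c : 'I_n -> 'I_n -> nat) (j : nat) (phi : 'I_a -> 'I_n) : Prop :=
  injective phi /\ (forall u v, H u v -> c (phi u) (phi v) = j).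

(* phi is increasing up to a cyclic permutation: for some t in V(H),
   (phi t, ..., phi (a-1), phi 0, ..., phi (t-1)) is increasing. *)
Definition cyc_increasing (a n : nat) (phi : 'I_a -> 'I_n) : Prop :=
  exists t : 'I_a,
    sorted ltn [seq val (phi i) | i <- rot t (enum 'I_a)].

(* The monotone cycle C_b^mon (for b = 2 this is K_2). *)
Definition Cmon (b : nat) : rel 'I_b :=
  fun i j => (i != j) &&
    [|| val j == (val i).+1, val i == (val j).+1,
        (val i == 0) && (val j == b.-1) | (val j == 0) && (val i == b.-1)].

Arguments Cmon : clear implicits.

Definition cyc_ramsey_prop (a1 a2 : nat) (H1 : rel 'I_a1) (H2 : rel 'I_a2)
    (n : nat) : Prop :=
  forall c : 'I_n -> 'I_n -> nat, two_coloring c ->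
    (exists phi, embedding_in_color H1 c 1 phi /\ cyc_increasing phi) \/
    (exists phi, embedding_in_color H2 c 2 phi /\ cyc_increasing phi).

(* R_cyc(H1,H2) >= m, where R_cyc is the least n with the property
   (or infinity if none exists). *)
Definition Rcyc_ge (a1 a2 : nat) (H1 : rel 'I_a1) (H2 : rel 'I_a2) (m : nat)
  : Prop :=
  forall n, cyc_ramsey_prop H1 H2 n -> m <= n.

(* Main.v *)
Require Import Defs.
From mathcomp Require Import all_boot.
From mathcomp Require Import zify.

Lemma nth_rot' (T : Type) (x0 : T) (s : seq T) n i :
  n <= size s -> i < size s -> nth x0 (rot n s) i = nth x0 s ((i + n) %% size s).
Proof.
move=> hn hi; rewrite /rot nth_cat size_drop.
case: ltnP => h.
  rewrite nth_drop modn_small; [congr nth; lia | lia].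
rewrite nth_take; last lia.
have -> : (i + n) %% size s = i - (size s - n).
  have -> : i + n = 1 * size s + (i - (size s - n)) by lia.
  rewrite modnMDl modn_small //; lia.
by [].
Qed.

Theorem theorem4p6 (a : nat) (H : rel 'I_a) :
  simple_graph H -> connected_graph H ->
  forall b : nat, 2 <= b -> Rcyc_ge H (Cmon b) (1 + (a - 1) * (b - 1)).
Proof.
move=> [Hsym Hirr] Hconn b hb n Hprop.
rewrite leqNgt; apply/negP => hn.
set d := a - 1.
have hn' : n <= d * (b - 1) by rewrite /d; lia.
pose c := fun x y : 'I_n => if val x %/ d == val y %/ d then 1 else 2.
have hc : two_coloring c.
  split=> x y; rewrite /c; first by rewrite eq_sym.
  by case: ifP; [left | right].
have dpos : forall x : 'I_n, 0 < d.
  move=> x; have := ltn_ord x; move: hn'; case: (d) => //=; lia.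
case: (Hprop c hc) => [[phi [[inj hE] [t _]]] | [phi [[inj hE] [t hs]]]].
- pose A := [pred u | val (phi u) %/ d == val (phi t) %/ d].
  have hcl : closed H A.
    move=> x y hxy; have := hE _ _ hxy; rewrite /c /A inE inE /=.
    by case: ifP => // /eqP ->.
  have hblk : forall u, val (phi u) %/ d = val (phi t) %/ d.
    move=> u; have := closed_connect hcl (Hconn t u).
    by rewrite !inE eqxx => /esym/eqP.
  have hd := dpos (phi t).
  have hu : uniq [seq val (phi u) %% d | u <- enum 'I_a].
    rewrite map_inj_in_uniq ?enum_uniq // => u v _ _ huv.
    apply: inj; apply: val_inj.
    by rewrite (divn_eq (val (phi u)) d) (divn_eq (val (phi v)) d) huv !hblk.
  have hsub : {subset [seq val (phi u) %% d | u <- enum 'I_a] <= iota 0 d}.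
    move=> x /mapP [u _ ->]; by rewrite mem_iota add0n ltn_pmod.
  have := uniq_leq_size hu hsub.
  rewrite size_map size_enum_ord size_iota /d.
  have := ltn_ord t; lia.
- set r := rot t (enum 'I_b).
  set s := [seq val (phi i) | i <- r].
  have hsz : size s = b by rewrite size_map size_rot size_enum_ord.
  have hd := dpos (phi t).
  have hnth : forall k, k < b -> nth 0 s k = val (phi (nth t r k)).
    by move=> k hk; rewrite (nth_map t) // size_rot size_enum_ord.
  have hr : forall k, k < b -> val (nth t r k) = (k + t) %% b.
    move=> k hk; have hb0 : 0 < b by lia.
    rewrite /r nth_rot' ?size_enum_ord //.
      exact: nth_enum_ord (ltn_pmod _ hb0).
    exact: ltnW.
  have key : forall k, k.+1 < b -> nth 0 s k %/ d < nth 0 s k.+1 %/ d.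
    move=> k hk.
    have hlt : nth 0 s k < nth 0 s k.+1.
      apply: (sorted_ltn_nth ltn_trans) => //; rewrite inE hsz //.
      exact: ltnW.
    rewrite ltn_neqAle (leq_div2r d (ltnW hlt)) andbT.
    rewrite !hnth //; last lia.
    have hC : Cmon b (nth t r k) (nth t r k.+1).
      rewrite /Cmon -val_eqE /= !hr //; last exact: ltnW.
      have -> : (k.+1 + t) %% b = ((k + t) %% b).+1 %% b.
        by rewrite addSn -addn1 -modnDml addn1.
      have hm : (k + t) %% b < b by rewrite ltn_pmod; lia.
      move: ((k + t) %% b) hm => m hm.
      case: (ltnP m.+1 b) => h.
        by rewrite modn_small // (ltn_eqF (ltnSn m)) eqxx.
      have hm' : m.+1 = b by lia.
      rewrite -hm' modnn /=.
      apply/andP; split; [rewrite -lt0n; lia | by rewrite !eqxx !orbT].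
    have := hE _ _ hC; rewrite /c; by case: ifP.
  have hge : forall k, k < b -> k <= nth 0 s k %/ d.
    elim=> [|k IH] hk //.
    have := key k hk; have := IH (ltnW hk); lia.
  have h1 := hge (b - 1) ltac:(lia).
  have h2 : nth 0 s (b - 1) < n.
    by rewrite hnth; [apply: ltn_ord | lia].
  have : nth 0 s (b - 1) %/ d < b - 1 by rewrite ltn_divLR //; lia.
  lia.
Qed.
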